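(* Let $G$ be a connected simple graph on $n\ge2$ vertices labeled so that $m_1+d_1\ge m_2+d_2\ge\cdots\ge m_n+d_n$, where $m_i=\frac{\sum_{j\sim i}d_j}{d_i}$. Let $\Delta$ be the maximum degree and $N=\max_{i\sim j}d_j/d_i$. Then for $1\le i\le n$, \[\rho(Q(G))\le \frac{m_i+d_i+\Delta-N+\sqrt{(m_i+d_i-\Delta+N)^2+4N\sum_{k=1}^{i-1}(m_k+d_k-m_i-d_i)}}{2}.\] Equality holds if and only if $m_1+d_1=\cdots=m_n+d_n$, or $i\ge2$ and $G$ is a bidegreed graph with $m_1+d_1>m_2+d_2=\cdots=m_n+d_n$ and $d_1=n-1>d_2=\cdots=d_n$.
   Context: $Q(G)=D(G)+A(G)$ is the signless Laplacian matrix ($A(G)$ adjacency matrix, $D(G)$ diagonal degree matrix), $d_i$ is the degree of $v_i$, $i\sim j$ means adjacency, $\rho$ is the spectral radius. A bidegreed graph has exactly two distinct vertex degrees. An empty sum equals $0$. *)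

(* Defs.v *)
From HB Require Import structures.
From mathcomp Require Import all_boot all_order all_algebra.
Set Implicit Arguments. Unset Strict Implicit. Unset Printing Implicit Defensive.
Import Order.TTheory GRing.Theory Num.Theory.
Local Open Scope ring_scope.

Definition simple_graph (n : nat) (adj : rel 'I_n) : Prop :=
  symmetric adj /\ irreflexive adj.

Definition connected_graph (n : nat) (adj : rel 'I_n) : Prop :=
  forall i j : 'I_n, connect adj i j.

Definition deg (n : nat) (adj : rel 'I_n) (i : 'I_n) : nat := #|[set j | adj i j]|.

Definition maxdeg (n : nat) (adj : rel 'I_n) : nat := (\max_(i < n) deg adj i)%N.

Definition avgdeg (R : fieldType) (n : nat) (adj : rel 'I_n) (i : 'I_n) : R :=
  (\sum_(j | adj i j) (deg adj j)%:R) / (deg adj i)%:R.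

Definition md (R : fieldType) (n : nat) (adj : rel 'I_n) (i : 'I_n) : R :=
  avgdeg R adj i + (deg adj i)%:R.

(* N = max_{i ~ j} d_j / d_i  (all these ratios are positive) *)
Definition Nratio (R : realFieldType) (n : nat) (adj : rel 'I_n) : R :=
  \big[Num.max/0]_(i < n) \big[Num.max/0]_(j < n | adj i j)
     ((deg adj j)%:R / (deg adj i)%:R).

Definition adjmx (R : fieldType) (n : nat) (adj : rel 'I_n) : 'M[R]_n :=
  \matrix_(i, j) (adj i j)%:R.

Definition degmx (R : fieldType) (n : nat) (adj : rel 'I_n) : 'M[R]_n :=
  \matrix_(i, j) (if i == j then (deg adj i)%:R else 0).

Definition signless_laplacian (R : fieldType) (n : nat) (adj : rel 'I_n) : 'M[R]_n :=
  degmx R adj + adjmx R adj.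

(* r is the spectral radius of A: the maximum modulus of an eigenvalue.
   (Used for real symmetric matrices, whose eigenvalues are all real.) *)
Definition is_spectral_radius (R : realFieldType) (n : nat) (A : 'M[R]_n) (r : R) : Prop :=
  (exists2 l, eigenvalue A l & `|l| = r) /\ (forall l, eigenvalue A l -> `|l| <= r).

Definition bidegreed (n : nat) (adj : rel 'I_n) : Prop :=
  size (undup [seq deg adj i | i <- enum 'I_n]) = 2%N.

(* Main.v *)
Require Import Defs.
From HB Require Import structures.
From mathcomp Require Import all_boot all_order all_algebra all_field.
From mathcomp Require Import spectral complex polyrcf.
Import Order.TTheory GRing.Theory Num.Theory.
Set Implicit Arguments. Unset Strict Implicit. Unset Printing Implicit Defensive.
Local Open Scope ring_scope.
From mathcomp Require Import ring lra.
Lemma sym_eigen (R : rcfType) n (A : 'M[R]_n) : (0 < n)%N ->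
  (forall i j, A i j = A j i) -> exists a, eigenvalue A a.
Proof.
move=> n0 symA.
pose f := real_complex R.
have [z ez] := eigenvalue_closed (map_mx f A) n0.
have := ez; move/eigenvalueP=> [v hv vnz].
suff zr : z \is Num.real.
  exists (complex.Re z); rewrite eigenvalue_root_char -(fmorph_root f) map_char_poly.
  have e : f (complex.Re z) = z by apply: RRe_real.
  rewrite [X in root _ X]e.
  by rewrite -eigenvalue_root_char.
pose s := \sum_j v 0 j * (v 0 j)^*.
have fr : forall a, (f a)^* = f a by move=> a; apply: conj_Creal; rewrite complex_real.
have sr : s^* = s.
  by rewrite rmorph_sum; apply: eq_bigr => j _; rewrite rmorphM /= conjCK mulrC.
have s0 : s != 0.
  apply: contra vnz => /eqP s0; apply/eqP/rowP => j; rewrite mxE.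
  have h0 : \sum_j `|v 0 j| ^+ 2 = 0.
    by rewrite -[RHS]s0 /s; apply: eq_bigr => k _; rewrite normCK.
  have := psumr_eq0P _ h0; move/(_ (fun k _ => exprn_ge0 2 (normr_ge0 _)) j isT).
  move/eqP; rewrite expf_eq0 /= normr_eq0 => /eqP H; exact: H.
pose X := \sum_j (v *m map_mx f A) 0 j * (v 0 j)^*.
have Xz : X = z * s.
  rewrite /X /s mulr_sumr; apply: eq_bigr => j _.
  by rewrite hv mxE mulrA.
have XE : X = \sum_j \sum_i v 0 i * f (A i j) * (v 0 j)^*.
  by apply: eq_bigr => j _; rewrite mxE mulr_suml; apply: eq_bigr => i _; rewrite mxE.
have Xr : X^* = X.
  rewrite XE rmorph_sum exchange_big /=; apply: eq_bigr => i _.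
  rewrite rmorph_sum; apply: eq_bigr => j _.
  by rewrite !rmorphM /= conjCK fr symA [RHS]mulrC [v 0 i * _]mulrC mulrA.
rewrite CrealE; apply/eqP; apply: (mulIf s0).
rewrite -Xz -{1}sr -rmorphM -Xz; exact: Xr.
Qed.
Lemma bigmax_attained (R : realDomainType) (s : seq R) : s != [::] ->
  exists2 x, x \in s & \big[Num.max/0]_(y <- s) `|y| = `|x|.
Proof.
elim: s => // a s IH _; rewrite big_cons.
case: (eqVneq s [::]) => [->|sn].
  by exists a; rewrite ?mem_head // big_nil; apply/max_idPl.
have [b bs ->] := IH sn.
case: (leP `|a| `|b|) => h.
  by exists b; rewrite ?in_cons ?bs ?orbT //; apply/max_idPr.
by exists a; rewrite ?mem_head //; apply/max_idPl/ltW.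
Qed.

Lemma bigmax_ub (R : realDomainType) (s : seq R) l : l \in s ->
  `|l| <= \big[Num.max/0]_(y <- s) `|y|.
Proof.
elim: s => // a s IH; rewrite in_cons big_cons => /orP[/eqP ->|/IH h].
  by rewrite le_max lexx.
by rewrite le_max h orbT.
Qed.

Lemma spec_rad_ex (R : rcfType) n (A : 'M[R]_n) : (exists a, eigenvalue A a) ->
  exists r, is_spectral_radius A r.
Proof.
move=> [a ea].
have cp0 : char_poly A != 0 by apply: monic_neq0; apply: char_poly_monic.
have inr : forall l, eigenvalue A l -> l \in rootsR (char_poly A).
  move=> l; rewrite eigenvalue_root_char => hl.
  by rewrite -(roots_on_rootsR cp0) hl andbT.
have sn : rootsR (char_poly A) != [::] by move: (inr a ea); case: (rootsR _).
have [x xs hx] := bigmax_attained sn.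
exists `|x|; split.
  exists x => //; rewrite eigenvalue_root_char.
  by move: xs; rewrite -(roots_on_rootsR cp0) => /andP[].
move=> l /inr hl; rewrite -hx.
exact: bigmax_ub.
Qed.

Lemma path_prop (T : finType) (e : rel T) (P : pred T) :
  (forall a b, e a b -> P a -> P b) -> forall a b, connect e a b -> P a -> P b.
Proof.
move=> hc a b /connectP [p hp ->]; elim: p a hp => [|y p IH] a //= /andP [hay hp] Pa.
by apply: IH => //; apply: hc Pa.
Qed.

Lemma eig_bound (R : realFieldType) n (Q : 'M[R]_n) (w : 'I_n -> R) th l (v : 'rV[R]_n)
  (e : rel 'I_n) :
  (forall j, 0 < w j) -> (forall j k, 0 <= Q j k) -> (forall j k, Q j k = Q k j) ->
  (forall k, \sum_j Q k j * w j <= th * w k) -> v *m Q = l *: v -> v != 0 ->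
  `|l| <= th /\
  ((forall a b, e a b -> 0 < Q a b) -> (forall a b, connect e a b) -> `|l| = th ->
   forall k, \sum_j Q k j * w j = th * w k).
Proof.
move=> wpos Qpos Qsym hrow hv vnz.
have [j0 j0nz] : exists j, v 0 j != 0.
  apply/existsP; apply: contraR vnz => /existsPn h; apply/eqP/rowP => j.
  by rewrite !mxE; apply/eqP; move: (h j); rewrite negbK.
pose F j := `|v 0 j| / w j.
case: (@arg_maxP _ _ _ j0 predT F isT) => k0 _ kmax.
pose t := F k0.
have vt : forall j, `|v 0 j| <= t * w j.
  by move=> j; rewrite -ler_pdivrMr ?wpos //; apply: kmax.
have key : forall k, `|l| * `|v 0 k| <= \sum_j Q k j * `|v 0 j|.
  move=> k; rewrite -normrM.
  have -> : l * v 0 k = (v *m Q) 0 k by rewrite hv !mxE.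
  rewrite mxE; apply: (le_trans (ler_norm_sum _ _ _)); apply: ler_sum => j _.
  by rewrite normrM (ger0_norm (Qpos _ _)) Qsym mulrC.
have key2 : forall k, \sum_j Q k j * `|v 0 j| <= t * (\sum_j Q k j * w j).
  move=> k; rewrite mulr_sumr; apply: ler_sum => j _.
  by rewrite mulrCA; apply: ler_wpM2l; [apply: Qpos | apply: vt].
have tpos : 0 < t.
  apply: (lt_le_trans _ (kmax j0 isT)); rewrite /F divr_gt0 ?wpos //.
  by rewrite normr_gt0 j0nz.
have vk0 : `|v 0 k0| = t * w k0 by rewrite /t /F divfK // gt_eqF ?wpos.
have lb : `|l| <= th.
  have := le_trans (key k0) (key2 k0).
  rewrite vk0 => h; have := le_trans h (ler_wpM2l (ltW tpos) (hrow k0)).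
  rewrite mulrCA mulrA [th * _]mulrC -mulrA => h2.
  rewrite ler_pM2l // in h2; by rewrite -(ler_pM2r (wpos k0)) [th * _]mulrC.
split => // epos econn lth.
have tight : forall k, `|v 0 k| = t * w k ->
   (forall j, e k j -> `|v 0 j| = t * w j) /\ \sum_j Q k j * w j = th * w k.
  move=> k hk.
  have h1 := key k; have h2 := key2 k; have h3 := ler_wpM2l (ltW tpos) (hrow k).
  rewrite hk lth in h1.
  have e1 : \sum_j Q k j * `|v 0 j| = t * (\sum_j Q k j * w j).
    apply/eqP; rewrite eq_le h2 /=; apply: (le_trans h3).
    by rewrite mulrCA.
  have e2 : t * \sum_j Q k j * w j = t * (th * w k).
    apply/eqP; rewrite eq_le h3 /= -e1 mulrCA; exact: h1.
  have tn0 : t != 0 by rewrite gt_eqF.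
  split; first last.
    by apply: (mulfI tn0).
  move=> j ekj.
  have : \sum_j (Q k j * (t * w j - `|v 0 j|)) = 0.
    rewrite (eq_bigr (fun j => t * (Q k j * w j) - Q k j * `|v 0 j|)); last first.
      by move=> i _; rewrite mulrBr mulrCA.
    by rewrite sumrB -mulr_sumr e1 subrr.
  move=> hs.
  have nn : forall i : 'I_n, true -> 0 <= Q k i * (t * w i - `|v 0 i|).
    by move=> i _; rewrite mulr_ge0 ?Qpos // subr_ge0 vt.
  have := psumr_eq0P nn hs (i := j) isT.
  move/eqP; rewrite mulf_eq0 gt_eqF ?epos //= subr_eq0 => /eqP ->.
  by [].
have allk : forall k, `|v 0 k| = t * w k.
  move=> k; apply/eqP; apply: (path_prop (P := fun k => `|v 0 k| == t * w k) _ (econn k0 k)).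
    by move=> a b eab /eqP ha; apply/eqP; exact: (tight a ha).1 b eab.
  by apply/eqP.
by move=> k; exact: (tight k (allk k)).2.
Qed.

Lemma deg_le n (adj : rel 'I_n) (hG : simple_graph adj) k : (deg adj k <= n.-1)%N.
Proof.
have sub : [set j | adj k j] \subset [set~ k].
  by apply/subsetP => j; rewrite !inE => hj; apply: contraTneq hj => ->; rewrite hG.2.
by rewrite /deg; move/subset_leq_card: sub; rewrite cardsC1 card_ord.
Qed.

Lemma deg_full n (adj : rel 'I_n) (hG : simple_graph adj) k :
  deg adj k = n.-1 -> forall j, j != k -> adj k j.
Proof.
move=> hd j jk.
have sub : [set j | adj k j] \subset [set~ k].
  by apply/subsetP => x; rewrite !inE => hj; apply: contraTneq hj => ->; rewrite hG.2.
have := subset_leqif_cards sub; rewrite cardsC1 card_ord -/(deg adj k) hd.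
case=> _; rewrite eqxx => /esym /eqP hAB.
have : j \in [set~ k] by rewrite !inE.
by rewrite -hAB inE.
Qed.

Lemma full_deg n (adj : rel 'I_n) (hG : simple_graph adj) k :
  (forall j, j != k -> adj k j) -> deg adj k = n.-1.
Proof.
move=> h; apply/eqP; rewrite eqn_leq deg_le //=.
have sub : [set~ k] \subset [set j | adj k j].
  by apply/subsetP => x; rewrite !inE => /h.
by move/subset_leq_card: sub; rewrite cardsC1 card_ord.
Qed.

Lemma deg_pos n (adj : rel 'I_n) (hn : (2 <= n)%N) (hconn : connected_graph adj) k :
  (0 < deg adj k)%N.
Proof.
have : (0 < #|[set~ k]|)%N by rewrite cardsC1 card_ord ltn_predRL.
case/card_gt0P => j; rewrite !inE => jk.
have /connectP [p hp ej] := hconn k j.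
case: p hp ej => [|a p] /=; first by move=> _ ejk; rewrite ejk eqxx in jk.
case/andP => hka _ _; apply/card_gt0P; exists a; by rewrite inE.
Qed.

Lemma bmax_ub (R : realDomainType) (I : eqType) (s : seq I) (P : pred I) (F : I -> R) x :
  x \in s -> P x -> F x <= \big[Num.max/0]_(i <- s | P i) F i.
Proof.
elim: s => // a s IH; rewrite in_cons big_cons => /orP [/eqP <-|xs] Px.
  by rewrite Px le_max lexx.
by case: (P a); rewrite ?le_max IH ?orbT.
Qed.

Lemma bmax_le (R : realDomainType) (I : eqType) (s : seq I) (P : pred I) (F : I -> R) M :
  0 <= M -> (forall i, P i -> F i <= M) -> \big[Num.max/0]_(i <- s | P i) F i <= M.
Proof.
move=> M0 h; elim/big_ind: _ => //.
by move=> x y hx hy; rewrite ge_max hx hy.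
Qed.

Lemma N_ub (R : realFieldType) n (adj : rel 'I_n) a b :
  adj a b -> (deg adj b)%:R / (deg adj a)%:R <= Nratio R adj.
Proof.
move=> hab; rewrite /Nratio.
apply: (le_trans _ (bmax_ub (fun i => \big[Num.max/0]_(j < n | adj i j)
     ((deg adj j)%:R / (deg adj i)%:R)) (mem_index_enum a) isT)).
exact: (bmax_ub (fun j => (deg adj j)%:R / (deg adj a)%:R) (mem_index_enum b) hab).
Qed.

Lemma N_le (R : realFieldType) n (adj : rel 'I_n) M : 0 <= M ->
  (forall a b, adj a b -> (deg adj b)%:R / (deg adj a)%:R <= M) -> Nratio R adj <= M.
Proof.
move=> M0 h; apply: bmax_le => // a _; apply: bmax_le => // b; exact: h.
Qed.

Lemma maxdeg_ub n (adj : rel 'I_n) k : (deg adj k <= maxdeg adj)%N.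
Proof. exact: (leq_bigmax_cond (F := deg adj) k isT). Qed.

Lemma maxdeg_attained n (adj : rel 'I_n) (k0 : 'I_n) : exists u, deg adj u = maxdeg adj.
Proof. by exists [arg max_(i > k0) deg adj i]; rewrite /maxdeg (bigop.bigmax_eq_arg k0). Qed.

Lemma md_deg (R : numFieldType) n (adj : rel 'I_n) k : (deg adj k != 0)%N ->
  (deg adj k)%:R * avgdeg R adj k = \sum_(j | adj k j) (deg adj j)%:R.
Proof.
move=> hk; rewrite /avgdeg mulrC divfK //.
by rewrite pnatr_eq0.
Qed.
Definition TT (R : numFieldType) n (adj : rel 'I_n) (i : 'I_n) : R :=
  \sum_(k < n | (k < i)%N) (md R adj k - md R adj i).
Definition theta (R : rcfType) n (adj : rel 'I_n) (i : 'I_n) : R :=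
  (md R adj i + (maxdeg adj)%:R - Nratio R adj
     + Num.sqrt ((md R adj i - (maxdeg adj)%:R + Nratio R adj) ^+ 2
                 + 4 * Nratio R adj * \sum_(k < n | (k < i)%N) (md R adj k - md R adj i))) / 2.
Definition cc (R : numFieldType) n (adj : rel 'I_n) (i k : 'I_n) : R :=
  if (k < i)%N then md R adj k - md R adj i else 0.
Definition ss (R : rcfType) n (adj : rel 'I_n) (i : 'I_n) : R :=
  theta R adj i - (maxdeg adj)%:R + Nratio R adj.
Definition ww (R : rcfType) n (adj : rel 'I_n) (i k : 'I_n) : R :=
  (deg adj k)%:R * (1 + cc R adj i k / ss R adj i).

Lemma cc_ge0 (R : numFieldType) n (adj : rel 'I_n)
  (hord : forall i j : 'I_n, (i <= j)%N -> md R adj j <= md R adj i) i k :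
  0 <= cc R adj i k.
Proof. rewrite /cc; case: (ltnP k i) => h //; rewrite subr_ge0; apply: hord; exact: ltnW. Qed.

Lemma sum_cc (R : numFieldType) n (adj : rel 'I_n) i : \sum_k cc R adj i k = TT R adj i.
Proof. by rewrite /TT [RHS]big_mkcond. Qed.

Lemma N_pos (R : realFieldType) n (adj : rel 'I_n) (hn : (2 <= n)%N)
  (hconn : connected_graph adj) : 0 < Nratio R adj.
Proof.
have n0 : (0 < n)%N by apply: leq_trans hn.
pose o0 : 'I_n := Ordinal n0.
have := deg_pos hn hconn o0; case/card_gt0P => b; rewrite inE => hb.
apply: lt_le_trans (N_ub R hb).
by rewrite divr_gt0 // ltr0n; apply: deg_pos.
Qed.

Lemma theta_facts (R : rcfType) n (adj : rel 'I_n) (hn : (2 <= n)%N)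
  (hG : simple_graph adj) (hconn : connected_graph adj)
  (hord : forall i j : 'I_n, (i <= j)%N -> md R adj j <= md R adj i) i :
  0 < ss R adj i /\ (theta R adj i - md R adj i) * ss R adj i = Nratio R adj * TT R adj i.
Proof.
have Np := N_pos R hn hconn.
have T0 : 0 <= TT R adj i by rewrite -sum_cc sumr_ge0 // => k _; apply: cc_ge0.
set u := md R adj i - (maxdeg adj)%:R + Nratio R adj.
set X := u ^+ 2 + 4 * Nratio R adj * TT R adj i.
have X0 : 0 <= X by rewrite /X addr_ge0 ?sqr_ge0 // !mulr_ge0 // ltW.
set r := Num.sqrt X.
have r0 : 0 <= r := sqrtr_ge0 X.
have r2 : r ^+ 2 = X by rewrite sqr_sqrtr.
have eth : theta R adj i = (md R adj i + (maxdeg adj)%:R - Nratio R adj + r) / 2 by [].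
have ess : ss R adj i = (u + r) / 2 by rewrite /ss eth /u; field.
split; last first.
  rewrite ess eth; apply: (@mulIf _ 4); first by rewrite pnatr_eq0.
  have -> : Nratio R adj * TT R adj i * 4 = X - u ^+ 2 by rewrite /X; ring.
  by rewrite -r2 /u; field.
rewrite ess divr_gt0 //.
have [Tp|Tz] : 0 < TT R adj i \/ TT R adj i = 0.
    by move: T0; rewrite le_eqVlt => /orP [/eqP ->|->]; [right|left].
  have : u ^+ 2 < r ^+ 2 by rewrite r2 /X ltrDl mulr_gt0 // mulr_gt0.
  by move=> h; nra.
have up : 0 < u.
  have n0 : (0 < n)%N by apply: leq_trans hn.
  pose o0 : 'I_n := Ordinal n0.
  have mi : md R adj i = md R adj o0.
    case: (posnP i) => hi.
      by congr md; apply: val_inj.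
    move: Tz; rewrite /TT => Tz.
    have nn : forall k : 'I_n, (k < i)%N -> 0 <= md R adj k - md R adj i.
      by move=> k hk; rewrite subr_ge0 hord // ltnW.
    have := psumr_eq0P nn Tz (i := o0) hi.
    by move/eqP; rewrite subr_eq0 => /eqP.
  have [w hw] := maxdeg_attained adj o0.
  have : md R adj w <= md R adj o0 by apply: hord.
  rewrite /u mi /md -hw => h.
  have : 0 <= avgdeg R adj w.
    by rewrite /avgdeg divr_ge0 // sumr_ge0.
  move=> ha; lra.
have : `|u| <= r.
  by rewrite -sqrtr_sqr; apply: ler_wsqrtr; rewrite /X Tz mulr0 addr0.
by rewrite gtr0_norm // => h; lra.
Qed.
Lemma Qrow (R : fieldType) n (adj : rel 'I_n) (hG : simple_graph adj) (w : 'I_n -> R) k :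
  \sum_j signless_laplacian R adj k j * w j = (deg adj k)%:R * w k + \sum_(j | adj k j) w j.
Proof.
rewrite (eq_bigr (fun j => (if k == j then (deg adj k)%:R * w j else 0) + (if adj k j then w j else 0))); last first.
  move=> j _; rewrite !mxE mulrDl; congr (_ + _).
    by case: eqP => [<-|]; rewrite ?mul0r.
  by case: (adj k j); rewrite ?mul1r ?mul0r.
rewrite big_split /= -[X in _ + X]big_mkcond; congr (_ + _).
rewrite (bigD1 k) //= eqxx big1 ?addr0 // => j /negbTE; rewrite eq_sym => ->.
by [].
Qed.

Lemma slack_id (F : fieldType) (th D N s T dk mk ck A1 A2 A3 B mdi : F) :
 s != 0 -> dk != 0 -> s = th - D + N -> (th - mdi) * s = N * T -> T = A1 + B + ck -> A3 = dk * mk ->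
 th * (dk * (1 + ck/s)) - (dk * (dk*(1+ck/s)) + (A3 + A2/s)) =
 (N*dk*A1 - A2)/s + N*dk/s*B + dk*(mdi - (mk+dk) + ck) + dk*(D-dk)*ck/s.
Proof.
move=> s0 d0 hs hT hTe ->; rewrite hTe in hT.
have -> : mdi = th - N * (A1 + B + ck) / s.
  by rewrite -hT; field.
have -> : D = th + N - s by rewrite hs; ring.
by field.
Qed.

Definition S1 (R : rcfType) n (adj : rel 'I_n) (i k : 'I_n) : R :=
  (\sum_(j | adj k j) (Nratio R adj * (deg adj k)%:R - (deg adj j)%:R) * cc R adj i j) / ss R adj i.
Definition S2 (R : rcfType) n (adj : rel 'I_n) (i k : 'I_n) : R :=
  Nratio R adj * (deg adj k)%:R / ss R adj i * \sum_(j | (j != k) && ~~ adj k j) cc R adj i j.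
Definition S3 (R : rcfType) n (adj : rel 'I_n) (i k : 'I_n) : R :=
  (deg adj k)%:R * (md R adj i - md R adj k + cc R adj i k).
Definition S4 (R : rcfType) n (adj : rel 'I_n) (i k : 'I_n) : R :=
  (deg adj k)%:R * ((maxdeg adj)%:R - (deg adj k)%:R) * cc R adj i k / ss R adj i.

Lemma slack_decomp (R : rcfType) n (adj : rel 'I_n) (hn : (2 <= n)%N)
  (hG : simple_graph adj) (hconn : connected_graph adj)
  (hord : forall i j : 'I_n, (i <= j)%N -> md R adj j <= md R adj i) i k :
  theta R adj i * ww R adj i k - \sum_j signless_laplacian R adj k j * ww R adj i j
  = S1 R adj i k + S2 R adj i k + S3 R adj i k + S4 R adj i k.
Proof.
have [sp hth] := theta_facts hn hG hconn hord i.
have dk0 : (deg adj k)%:R != 0 :> R by rewrite pnatr_eq0 -lt0n deg_pos.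
rewrite Qrow //.
have eA : \sum_(j | adj k j) ww R adj i j =
   \sum_(j | adj k j) (deg adj j)%:R + (\sum_(j | adj k j) (deg adj j)%:R * cc R adj i j) / ss R adj i.
  rewrite mulr_suml -big_split /=; apply: eq_bigr => j _.
  by rewrite /ww mulrDr mulr1 mulrA.
have eS1 : S1 R adj i k = (Nratio R adj * (deg adj k)%:R * \sum_(j | adj k j) cc R adj i j
     - \sum_(j | adj k j) (deg adj j)%:R * cc R adj i j) / ss R adj i.
  rewrite /S1 mulr_sumr -sumrB; congr (_ / _); apply: eq_bigr => j _; by rewrite mulrBl.
have eT : TT R adj i = \sum_(j | adj k j) cc R adj i j
      + \sum_(j | (j != k) && ~~ adj k j) cc R adj i j + cc R adj i k.
  rewrite -sum_cc (bigD1 k) //= addrC; congr (_ + _).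
  rewrite (bigID (fun j => adj k j)) /=; congr (_ + _).
  apply: eq_bigl => j; case h: (adj k j); rewrite ?andbT ?andbF //.
  by apply/eqP => ejk; rewrite ejk hG.2 in h.
rewrite eA eS1 /S2 /S3 /S4 /ww [md R adj k]/md.
apply: (@slack_id R _ (maxdeg adj)%:R _ _ (TT R adj i)) => //.
- by rewrite gt_eqF.
- by rewrite md_deg // -lt0n deg_pos.
Qed.

Lemma slacks_ge0 (R : rcfType) n (adj : rel 'I_n) (hn : (2 <= n)%N)
  (hG : simple_graph adj) (hconn : connected_graph adj)
  (hord : forall i j : 'I_n, (i <= j)%N -> md R adj j <= md R adj i) i k :
  [/\ 0 <= S1 R adj i k, 0 <= S2 R adj i k, 0 <= S3 R adj i k & 0 <= S4 R adj i k].
Proof.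
have [sp _] := theta_facts hn hG hconn hord i.
have Np := N_pos R hn hconn.
have dkp : 0 < (deg adj k)%:R :> R by rewrite ltr0n deg_pos.
split.
- rewrite /S1 divr_ge0 ?(ltW sp) // sumr_ge0 // => j hj.
  rewrite mulr_ge0 ?cc_ge0 // subr_ge0.
  by rewrite -ler_pdivrMr // N_ub.
- rewrite /S2 mulr_ge0 ?divr_ge0 ?mulr_ge0 ?(ltW sp) ?(ltW Np) ?(ltW dkp) //.
  by rewrite sumr_ge0 // => j _; apply: cc_ge0.
- rewrite /S3 mulr_ge0 ?(ltW dkp) // /cc; case: ltnP => h.
    by rewrite addrA addrNK subrr.
  by rewrite addr0 subr_ge0 hord.
- rewrite /S4 divr_ge0 ?(ltW sp) // mulr_ge0 ?cc_ge0 // mulr_ge0 ?(ltW dkp) //.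
  by rewrite subr_ge0 ler_nat maxdeg_ub.
Qed.
Lemma bideg n (adj : rel 'I_n) (o0 k1 : 'I_n) : k1 != o0 ->
  (forall k, k != o0 -> deg adj k = deg adj k1) -> deg adj k1 != deg adj o0 -> bidegreed adj.
Proof.
move=> k10 hk hne; rewrite /bidegreed.
have pe : perm_eq (undup [seq deg adj i | i <- enum 'I_n]) [:: deg adj o0; deg adj k1].
  apply: uniq_perm; first exact: undup_uniq.
    by rewrite /= inE eq_sym hne.
  move=> x; rewrite mem_undup !inE; apply/mapP/idP.
    case=> y _ ->; case: (eqVneq y o0) => [->|/hk ->]; by rewrite eqxx ?orbT.
  case/orP => /eqP ->; by [exists o0; rewrite ?mem_enum | exists k1; rewrite ?mem_enum].
by rewrite (perm_size pe).
Qed.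

Lemma all_deg_md (R : numFieldType) n (adj : rel 'I_n) D : (0 < D)%N ->
  (forall k, deg adj k = D) -> forall k, md R adj k = (D + D)%:R.
Proof.
move=> D0 h k; rewrite /md /avgdeg h.
rewrite (eq_bigr (fun _ => D%:R)) ?sumr_const; last by move=> j _; rewrite h.
have -> : #|adj k| = D by rewrite -(h k) /deg cardsE.
by rewrite -[D%:R *+ D]mulr_natl mulfK ?natrD // pnatr_eq0 -lt0n.
Qed.

Lemma tight_imp (R : rcfType) n (adj : rel 'I_n) (hn : (2 <= n)%N)
  (hG : simple_graph adj) (hconn : connected_graph adj)
  (hord : forall i j : 'I_n, (i <= j)%N -> md R adj j <= md R adj i) (i : 'I_n)
  (h1 : forall k j, adj k j -> (Nratio R adj * (deg adj k)%:R - (deg adj j)%:R) * cc R adj i j = 0)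
  (h2 : forall k j, j != k -> ~~ adj k j -> cc R adj i j = 0)
  (h3 : forall k, md R adj i - md R adj k + cc R adj i k = 0) :
  (forall j k : 'I_n, md R adj j = md R adj k)
  \/ ((1 <= i)%N /\ bidegreed adj /\
      (forall j k : 'I_n, j = 0%N :> nat -> (0 < k)%N ->
          md R adj k < md R adj j /\ deg adj j = n.-1 /\ (deg adj k < deg adj j)%N) /\
      (forall j k : 'I_n, (0 < j)%N -> (0 < k)%N ->
          md R adj j = md R adj k /\ deg adj j = deg adj k)).
Proof.
have mdc : forall k, md R adj k = md R adj i + cc R adj i k.
  by move=> k; move: (h3 k) => h; lra.
case: (boolP [forall j, cc R adj i j == 0]) => [/forallP allz | ].
  by left => j k; rewrite (mdc j) (mdc k) !(eqP (allz _)).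
rewrite negb_forall => /existsP [j0 hj0].
have c0 : forall j, 0 <= cc R adj i j := cc_ge0 hord i.
have n0 : (0 < n)%N by apply: leq_trans hn.
pose o0 : 'I_n := Ordinal n0.
have j0i : (j0 < i)%N by move: hj0; rewrite /cc; case: ltnP => //; rewrite eqxx.
have i0 : (0 < i)%N by apply: leq_ltn_trans j0i.
have co : cc R adj i o0 = md R adj o0 - md R adj i by rewrite /cc /= i0.
have cop : 0 < cc R adj i o0.
  have : 0 < cc R adj i j0 by rewrite lt_def hj0 c0.
  rewrite co /cc j0i => h; apply: (lt_le_trans h).
  by rewrite lerD2r; apply: hord.
have F1 : forall j, cc R adj i j != 0 -> deg adj j = n.-1.
  move=> j hj; apply: full_deg => // k hk.
  case h: (adj k j); first by rewrite hG.1.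
  have hjk : j != k by rewrite eq_sym.
  by move: hj; rewrite (h2 k j hjk) ?h ?eqxx.
have d0 : deg adj o0 = n.-1 by apply: F1; rewrite gt_eqF.
have adj0 : forall k, k != o0 -> adj k o0.
  by move=> k hk; rewrite hG.1; apply: deg_full.
have Np : Nratio R adj != 0 by rewrite gt_eqF // N_pos.
have F2 : forall k, k != o0 -> Nratio R adj * (deg adj k)%:R = (deg adj o0)%:R.
  move=> k hk; have := h1 _ _ (adj0 k hk); move/eqP; rewrite mulf_eq0 (gt_eqF cop) orbF.
  by rewrite subr_eq0 => /eqP.
have degeq : forall k k', k != o0 -> k' != o0 -> deg adj k = deg adj k'.
  move=> k k' hk hk'; apply/eqP; rewrite -(eqr_nat R); apply/eqP.
  by apply: (mulfI Np); rewrite !F2.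
have F3 : forall k, k != o0 -> (deg adj k < n.-1)%N.
  move=> k hk; rewrite ltn_neqAle deg_le // andbT; apply/eqP => dk.
  have alld : forall x, deg adj x = n.-1.
    by move=> x; case: (eqVneq x o0) => [->|hx] //; rewrite (degeq x k).
  have := all_deg_md R _ alld; rewrite ltn_predRL => /(_ hn) hmd.
  by move: cop; rewrite co !hmd subrr ltxx.
have F4 : forall k, k != o0 -> cc R adj i k = 0.
  move=> k hk; apply/eqP; apply: contraT => hc.
  by move: (F3 k hk); rewrite (F1 k hc) ltnn.
have nz : forall k : 'I_n, (0 < k)%N -> k != o0.
  by move=> k hk; apply: contraTneq hk => ->.
right; split => //; split.
  have h1n : (1 < n)%N by [].
  pose k1 : 'I_n := Ordinal h1n.
  have k1o : k1 != o0 by apply: nz.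
  apply: (bideg k1o) => [k hk|]; first exact: degeq.
  by rewrite d0 neq_ltn F3.
split.
  move=> j k hj hk.
  have -> : j = o0 by apply: val_inj.
  split; first by rewrite (mdc k) F4 ?nz // addr0 -subr_gt0 -co.
  by split => //; rewrite d0 F3 ?nz.
move=> j k hj hk; split; last by apply: degeq; apply: nz.
by rewrite (mdc j) (mdc k) !F4 ?nz.
Qed.
Lemma cond_imp (R : rcfType) n (adj : rel 'I_n) (hn : (2 <= n)%N)
  (hG : simple_graph adj) (hconn : connected_graph adj)
  (hord : forall i j : 'I_n, (i <= j)%N -> md R adj j <= md R adj i) (i : 'I_n) :
  ((forall j k : 'I_n, md R adj j = md R adj k)
  \/ ((1 <= i)%N /\ bidegreed adj /\
      (forall j k : 'I_n, j = 0%N :> nat -> (0 < k)%N ->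
          md R adj k < md R adj j /\ deg adj j = n.-1 /\ (deg adj k < deg adj j)%N) /\
      (forall j k : 'I_n, (0 < j)%N -> (0 < k)%N ->
          md R adj j = md R adj k /\ deg adj j = deg adj k))) ->
  [/\ (forall k j, adj k j -> (Nratio R adj * (deg adj k)%:R - (deg adj j)%:R) * cc R adj i j = 0),
      (forall k j, j != k -> ~~ adj k j -> cc R adj i j = 0),
      (forall k, md R adj i - md R adj k + cc R adj i k = 0) &
      (forall k, ((maxdeg adj)%:R - (deg adj k)%:R) * cc R adj i k = 0)].
Proof.
case=> [allmd | [i1 [_ [hz hpos]]]].
  have cz : forall j, cc R adj i j = 0.
    by move=> j; rewrite /cc; case: ifP => _ //; rewrite (allmd j i) subrr.
  split=> [k j _|k j _ _|k|k]; rewrite ?cz ?mulr0 //.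
  by rewrite addr0 (allmd i k) subrr.
have n0 : (0 < n)%N by apply: leq_trans hn.
pose o0 : 'I_n := Ordinal n0.
have pos : forall k : 'I_n, k != o0 -> (0 < k)%N.
  by move=> k hk; rewrite lt0n; apply: contraNneq hk => h; apply/eqP; apply: val_inj.
have h1n : (1 < n)%N by [].
pose k1 : 'I_n := Ordinal h1n.
have k1o : k1 != o0 by apply/eqP => /(congr1 val).
have io : i != o0 by apply/eqP => ei; move: i1; rewrite ei.
have mdk : forall k, k != o0 -> md R adj k = md R adj i.
  by move=> k hk; apply: (hpos k i (pos k hk) (pos i io)).1.
have cz : forall k, k != o0 -> cc R adj i k = 0.
  by move=> k hk; rewrite /cc; case: ifP => // _; rewrite mdk // subrr.
have co : cc R adj i o0 = md R adj o0 - md R adj i by rewrite /cc /= i1.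
have [_ [d0 dlt]] := hz o0 k1 erefl isT.
have adj0 : forall k, k != o0 -> adj k o0.
  by move=> k hk; rewrite hG.1; apply: deg_full.
pose D := deg adj k1.
have dD : forall k, k != o0 -> deg adj k = D.
  by move=> k hk; apply: (hpos k k1 (pos k hk) isT).2.
have Dp : (0 < D)%N by apply: deg_pos.
have DpR : 0 < D%:R :> R by rewrite ltr0n.
have Nv : Nratio R adj = (deg adj o0)%:R / D%:R.
  apply/le_anti/andP; split.
    apply: N_le => [|a b hab]; first by rewrite divr_ge0.
    have dap : 0 < (deg adj a)%:R :> R by rewrite ltr0n deg_pos.
    have Da : D%:R <= (deg adj a)%:R :> R.
      rewrite ler_nat; case: (eqVneq a o0) => [->|ha]; first exact: ltnW.
      by rewrite dD.
    apply: (@le_trans _ _ ((deg adj o0)%:R / (deg adj a)%:R)).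
      apply: ler_wpM2r; first by rewrite invr_ge0 ltW.
      by rewrite ler_nat d0 deg_le.
    apply: ler_wpM2l; first by rewrite ler0n.
    by rewrite lef_pV2 ?posrE.
  by rewrite -/D -(dD k1 k1o); apply: N_ub; apply: adj0.
split.
- move=> k j hkj; case: (eqVneq j o0) => [ej|hj]; last by rewrite cz ?mulr0.
  have hk : k != o0 by apply: contraTneq hkj => ->; rewrite ej hG.2.
  by rewrite ej Nv (dD k hk) divfK ?subrr ?mul0r // gt_eqF.
- move=> k j hjk hkj; case: (eqVneq j o0) => [ej|hj]; last by rewrite cz.
  by move: hkj; rewrite ej adj0 // -ej eq_sym.
- move=> k; case: (eqVneq k o0) => [->|hk]; first by rewrite co addrA addrNK subrr.
  by rewrite cz // mdk // subrr addr0.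
- move=> k; case: (eqVneq k o0) => [->|hk]; last by rewrite cz ?mulr0.
  have -> : maxdeg adj = deg adj o0.
    apply/eqP; rewrite eqn_leq maxdeg_ub andbT d0.
    by apply/bigmax_leqP => j _; apply: deg_le.
  by rewrite subrr mul0r.
Qed.
Lemma Qsym (R : fieldType) n (adj : rel 'I_n) (hG : simple_graph adj) a b :
  signless_laplacian R adj a b = signless_laplacian R adj b a.
Proof.
rewrite !mxE hG.1; congr (_ + _).
by case: eqVneq => [->|h]; rewrite ?eqxx // eq_sym (negbTE h).
Qed.

Lemma Qnn (R : numFieldType) n (adj : rel 'I_n) a b : 0 <= signless_laplacian R adj a b.
Proof. by rewrite !mxE addr_ge0 //; case: eqP. Qed.

Lemma Qadj (R : numFieldType) n (adj : rel 'I_n) a b : adj a b -> 0 < signless_laplacian R adj a b.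
Proof. by move=> h; rewrite !mxE h ltr_wpDl //; case: eqP. Qed.

Lemma ww_pos (R : rcfType) n (adj : rel 'I_n) (hn : (2 <= n)%N)
  (hG : simple_graph adj) (hconn : connected_graph adj)
  (hord : forall i j : 'I_n, (i <= j)%N -> md R adj j <= md R adj i) i k :
  0 < ww R adj i k.
Proof.
have [sp _] := theta_facts hn hG hconn hord i.
rewrite /ww mulr_gt0 ?ltr0n ?deg_pos //.
have : 0 <= cc R adj i k / ss R adj i by rewrite divr_ge0 ?cc_ge0 ?ltW.
move=> h; lra.
Qed.

Lemma row_le (R : rcfType) n (adj : rel 'I_n) (hn : (2 <= n)%N)
  (hG : simple_graph adj) (hconn : connected_graph adj)
  (hord : forall i j : 'I_n, (i <= j)%N -> md R adj j <= md R adj i) i k :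
  \sum_j signless_laplacian R adj k j * ww R adj i j <= theta R adj i * ww R adj i k.
Proof.
rewrite -subr_ge0 slack_decomp //.
by case: (slacks_ge0 hn hG hconn hord i k) => *; rewrite !addr_ge0.
Qed.

Lemma tight_h (R : rcfType) n (adj : rel 'I_n) (hn : (2 <= n)%N)
  (hG : simple_graph adj) (hconn : connected_graph adj)
  (hord : forall i j : 'I_n, (i <= j)%N -> md R adj j <= md R adj i) i :
  (forall k, \sum_j signless_laplacian R adj k j * ww R adj i j = theta R adj i * ww R adj i k) ->
  [/\ (forall k j, adj k j -> (Nratio R adj * (deg adj k)%:R - (deg adj j)%:R) * cc R adj i j = 0),
      (forall k j, j != k -> ~~ adj k j -> cc R adj i j = 0) &
      (forall k, md R adj i - md R adj k + cc R adj i k = 0)].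
Proof.
move=> ht.
have [sp _] := theta_facts hn hG hconn hord i.
have Np := N_pos R hn hconn.
have z : forall k, [/\ S1 R adj i k = 0, S2 R adj i k = 0, S3 R adj i k = 0 & S4 R adj i k = 0].
  move=> k; have := slack_decomp hn hG hconn hord i k; rewrite ht subrr.
  case: (slacks_ge0 hn hG hconn hord i k) => a b c d e.
  split; lra.
have dkp : forall k, 0 < (deg adj k)%:R :> R by move=> k; rewrite ltr0n deg_pos.
split.
- move=> k j hkj; case: (z k) => /eqP h _ _ _.
  move: h; rewrite /S1 mulf_eq0 invr_eq0 (gt_eqF sp) orbF => /eqP h.
  have nn : forall j, adj k j -> 0 <= (Nratio R adj * (deg adj k)%:R - (deg adj j)%:R) * cc R adj i j.
    move=> x hx; rewrite mulr_ge0 ?cc_ge0 // subr_ge0.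
    by rewrite -ler_pdivrMr // N_ub.
  exact: (psumr_eq0P nn h (i := j) hkj).
- move=> k j hjk hkj; case: (z k) => _ /eqP h _ _.
  move: h; rewrite /S2 mulf_eq0 !mulf_eq0 invr_eq0 (gt_eqF sp) (gt_eqF Np) (gt_eqF (dkp k)) /=.
  move=> /eqP h.
  have nn : forall x, (x != k) && ~~ adj k x -> 0 <= cc R adj i x by move=> *; apply: cc_ge0.
  by apply: (psumr_eq0P nn h (i := j)); rewrite hjk hkj.
- move=> k; case: (z k) => _ _ h _.
  move: h; rewrite /S3 => /eqP; rewrite mulf_eq0 (gt_eqF (dkp k)) /= => /eqP e; exact: e.
Qed.

Lemma h_tight (R : rcfType) n (adj : rel 'I_n) (hn : (2 <= n)%N)
  (hG : simple_graph adj) (hconn : connected_graph adj)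
  (hord : forall i j : 'I_n, (i <= j)%N -> md R adj j <= md R adj i) i :
  [/\ (forall k j, adj k j -> (Nratio R adj * (deg adj k)%:R - (deg adj j)%:R) * cc R adj i j = 0),
      (forall k j, j != k -> ~~ adj k j -> cc R adj i j = 0),
      (forall k, md R adj i - md R adj k + cc R adj i k = 0) &
      (forall k, ((maxdeg adj)%:R - (deg adj k)%:R) * cc R adj i k = 0)] ->
  forall k, \sum_j signless_laplacian R adj k j * ww R adj i j = theta R adj i * ww R adj i k.
Proof.
case=> h1 h2 h3 h4 k; apply/eqP; rewrite eq_sym -subr_eq0 slack_decomp //.
have -> : S1 R adj i k = 0.
  by rewrite /S1 big1 ?mul0r // => j hj; apply: h1.
have -> : S2 R adj i k = 0.
  by rewrite /S2 big1 ?mulr0 // => j /andP [a b]; exact: (h2 k j a b).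
have -> : S3 R adj i k = 0 by rewrite /S3 h3 mulr0.
have -> : S4 R adj i k = 0 by rewrite /S4 -[_ * _ * cc R adj i k]mulrA h4 mulr0 mul0r.
by rewrite !addr0.
Qed.

Theorem corollary5 (R : rcfType) (n : nat) (adj : rel 'I_n)
  (hn : (2 <= n)%N) (hG : simple_graph adj) (hconn : connected_graph adj)
  (hord : forall i j : 'I_n, (i <= j)%N -> md R adj j <= md R adj i)
  (i : 'I_n) :
  let Delta := ((maxdeg adj)%:R : R) in
  let N := Nratio R adj in
  let bound :=
    (md R adj i + Delta - N
     + Num.sqrt ((md R adj i - Delta + N) ^+ 2
                 + 4 * N * \sum_(k < n | (k < i)%N) (md R adj k - md R adj i))) / 2 in
  exists rho : R,
    is_spectral_radius (signless_laplacian R adj) rho /\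
    rho <= bound /\
    (rho = bound <->
      ((forall j k : 'I_n, md R adj j = md R adj k)
       \/ ((1 <= i)%N /\ bidegreed adj /\
           (forall j k : 'I_n, j = 0%N :> nat -> (0 < k)%N ->
               md R adj k < md R adj j /\ deg adj j = n.-1 /\ (deg adj k < deg adj j)%N) /\
           (forall j k : 'I_n, (0 < j)%N -> (0 < k)%N ->
               md R adj j = md R adj k /\ deg adj j = deg adj k)))).
Proof.
move=> Delta N bound.
have eb : bound = theta R adj i by [].
rewrite eb.
have n0 : (0 < n)%N by apply: leq_trans hn.
pose Q := signless_laplacian R adj.
have Qs : forall a b, Q a b = Q b a by move=> a b; apply: Qsym.
have [rho [[l0 el0 hl0] hmax]] := spec_rad_ex (sym_eigen n0 Qs).
exists rho; split; first by split => //; exists l0.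
have eig : forall l, eigenvalue Q l ->
  `|l| <= theta R adj i /\
  ((forall a b, adj a b -> 0 < Q a b) -> (forall a b, connect adj a b) -> `|l| = theta R adj i ->
   forall k, \sum_j Q k j * ww R adj i j = theta R adj i * ww R adj i k).
  move=> l /eigenvalueP [v hv vnz].
  exact: (@eig_bound R n Q (ww R adj i) (theta R adj i) l v adj (ww_pos hn hG hconn hord i)
    (Qnn R adj) Qs (row_le hn hG hconn hord i) hv vnz).
have rle : rho <= theta R adj i by rewrite -hl0; exact: (eig l0 el0).1.
split => //; split.
  move=> rt.
  have ht := (eig l0 el0).2 (@Qadj R n adj) hconn (etrans hl0 rt).
  case: (tight_h hn hG hconn hord ht) => h1 h2 h3.
  exact: tight_imp.
move=> hc.
have ht := h_tight hn hG hconn hord (cond_imp hn hG hconn hord hc).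
have eth : eigenvalue Q (theta R adj i).
  apply/eigenvalueP; exists (\row_j ww R adj i j).
    apply/rowP => j; rewrite !mxE -ht.
    by apply: eq_bigr => k _; rewrite mxE Qs mulrC.
  apply/eqP => /rowP /(_ i); rewrite !mxE => h.
  by move: (ww_pos hn hG hconn hord i i); rewrite h ltxx.
apply/le_anti; rewrite rle /=.
exact: le_trans (ler_norm _) (hmax _ eth).
Qed.
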